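(* Let $S$ be an $L$-theory extending $I\Sigma_1$ such that for some $K\in\mathbb{N}$, $S$ proves: for all pairwise coprime $a,b,c$ with $a+b=c$ one has $c<K\,\mathrm{rad}(abc)^{1+1/3}$; and $S$ proves that the only $x,y,a,b>1$ with $x^a-y^b=1$ are $x=3,a=2,y=2,b=3$. Let $\langle \mathcal{B}, e\rangle$ be any model of $S + \mathrm{Exp}'$, with $\mathcal{A}$ a substructure of $\mathcal{B}$ satisfying $\mathrm{Pr}$ such that $e: B\times A\to B$. Then Catalan's conjecture for $e$ holds in $\langle \mathcal{B}, e\rangle$: if $x,y\in B$, $a,b\in A$, $x,y,a,b>1$ and $e(x,a)-e(y,b)=1$, then $x=3$, $a=2$, $y=2$, $b=3$.
   Context: $L = \langle 0,1,+,\cdot,\le\rangle$; $x^y$ denotes the exponential $\Delta_1$-definable in $I\Sigma_1$; $\mathrm{rad}(a)$ is the product of the distinct primes dividing $a$. Presburger arithmetic $\mathrm{Pr}$: $0 \ne z+1$; $x\neq 0 \to \exists z\,(x = z+1)$; $x+z=y+z\to x=y$; $x+0=x$; associativity and commutativity of $+$; $x\le y \leftrightarrow \exists z\,(x+z=y)$; for each standard $0<n$, $\exists y\,(ny \le x < n(y+1))$. $\mathrm{Exp}'$ consists of: (e0) there is an $L$-substructure $\mathcal{A}$ of $\mathcal{B}$ satisfying $\mathrm{Pr}$ with $e: B\times A\to B$; and for all $x\in B$, $y,z\in A$: (e1) $(x=1\vee y=0)\leftrightarrow e(x,y)=1$; (e2) $x\neq0\to e(x,y)\neq 0$; (e3)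 $e(x,1)=x$; (e4) $e(x,y+z)=e(x,y)e(x,z)$. *)

(* Defs.v *)
From Stdlib Require Import Arith.

Record Lstr := {
  dom  :> Type;
  zer  : dom;
  one  : dom;
  add  : dom -> dom -> dom;
  mul  : dom -> dom -> dom;
  le   : dom -> dom -> Prop }.

Inductive term : Type :=
  | tvar (i : nat) | tzero | tone | tadd (s t : term) | tmul (s t : term).

Inductive form : Type :=
  | feq  (s t : term) | fle (s t : term) | fbot
  | fimp (p q : form) | fand (p q : form) | f_or (p q : form)
  | fall (i : nat) (p : form)
  | fex  (i : nat) (p : form)
  | fball (i : nat) (t : term) (p : form)
  | fbex  (i : nat) (t : term) (p : form).

Definition upd {M : Lstr} (r : nat -> M) (i : nat) (d : M) : nat -> M :=
  fun j => if Nat.eqb j i then d else r j.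

Fixpoint eval (M : Lstr) (r : nat -> M) (t : term) : M :=
  match t with
  | tvar i => r i | tzero => zer M | tone => one M
  | tadd s u => add M (eval M r s) (eval M r u)
  | tmul s u => mul M (eval M r s) (eval M r u)
  end.

(* In a bounded quantifier the bound t is evaluated outside the binder. *)
Fixpoint sat (M : Lstr) (r : nat -> M) (p : form) : Prop :=
  match p with
  | feq s t => eval M r s = eval M r t
  | fle s t => le M (eval M r s) (eval M r t)
  | fbot => False
  | fimp p q => sat M r p -> sat M r q
  | fand p q => sat M r p /\ sat M r q
  | f_or p q => sat M r p \/ sat M r q
  | fall i p => forall d : M, sat M (upd r i d) p
  | fex i p => exists d : M, sat M (upd r i d) p
  | fball i t p => forall d : M, le M d (eval M r t) -> sat M (upd r i d) p
  | fbex i t p => exists d : M, le M d (eval M r t) /\ sat M (upd r i d) p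
  end.

Definition valid (M : Lstr) (p : form) : Prop := forall r : nat -> M, sat M r p.

Definition theory := form -> Prop.
Definition Model (S : theory) (M : Lstr) : Prop := forall p, S p -> valid M p.
(* "S proves p": by Goedel's completeness theorem, p holds in every model of S. *)
Definition Proves (S : theory) (p : form) : Prop :=
  forall M : Lstr, Model S M -> valid M p.

Inductive delta0 : form -> Prop :=
  | d0_eq s t : delta0 (feq s t)
  | d0_le s t : delta0 (fle s t)
  | d0_bot : delta0 fbot
  | d0_imp p q : delta0 p -> delta0 q -> delta0 (fimp p q)
  | d0_and p q : delta0 p -> delta0 q -> delta0 (fand p q)
  | d0_or p q : delta0 p -> delta0 q -> delta0 (f_or p q)
  | d0_ball i t p : delta0 p -> delta0 (fball i t p)
  | d0_bex i t p : delta0 p -> delta0 (fbex i t p).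

Inductive sigma1 : form -> Prop :=
  | s1_d0 p : delta0 p -> sigma1 p
  | s1_ex i p : sigma1 p -> sigma1 (fex i p).

Definition ISigma1 (M : Lstr) : Prop :=
  (forall x : M, add M x (one M) <> zer M) /\
  (forall x y : M, add M x (one M) = add M y (one M) -> x = y) /\
  (forall x : M, x <> zer M -> exists y : M, x = add M y (one M)) /\
  (forall x : M, add M x (zer M) = x) /\
  (forall x y : M, add M x (add M y (one M)) = add M (add M x y) (one M)) /\
  (forall x : M, mul M x (zer M) = zer M) /\
  (forall x y : M, mul M x (add M y (one M)) = add M (mul M x y) x) /\
  (forall x y : M, le M x y <-> exists z : M, add M x z = y) /\
  (forall (p : form) (i : nat) (r : nat -> M), sigma1 p ->
      sat M (upd r i (zer M)) p ->
      (forall d : M, sat M (upd r i d) p -> sat M (upd r i (add M d (one M))) p) ->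
      forall d : M, sat M (upd r i d) p).

Definition ExtendsISigma1 (S : theory) : Prop :=
  forall M : Lstr, Model S M -> ISigma1 M.

Fixpoint tnum (n : nat) : term :=
  match n with 0 => tzero | S n => tadd (tnum n) tone end.

Definition f_lt (s t : term) : form := fand (fle s t) (fimp (feq s t) fbot).

(* d | u  (k fresh) *)
Definition f_dvd (d u : term) (k : nat) : form :=
  fbex k u (feq (tmul d (tvar k)) u).

(* gcd(u,v) = 1, for u > 0  (k1, k2 fresh) *)
Definition f_coprime (u v : term) (k1 k2 : nat) : form :=
  fball k1 u (fimp (fand (f_dvd (tvar k1) u k2) (f_dvd (tvar k1) v k2))
                   (feq (tvar k1) tone)).

Definition f_prime (p : term) (k1 k2 : nat) : form :=
  fand (f_lt tone p)
       (fball k1 p (fimp (f_dvd (tvar k1) p k2)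
                         (f_or (feq (tvar k1) tone) (feq (tvar k1) p)))).

Definition f_squarefree (r : term) (k1 k2 : nat) : form :=
  fball k1 r (fimp (f_dvd (tmul (tvar k1) (tvar k1)) r k2) (feq (tvar k1) tone)).

(* r = rad(n), for n > 0: r squarefree, r | n, every prime divisor of n divides r *)
Definition f_rad (n r : term) (k1 k2 k3 : nat) : form :=
  fand (f_squarefree r k1 k2)
   (fand (f_dvd r n k1)
     (fball k1 n (fimp (fand (f_prime (tvar k1) k2 k3) (f_dvd (tvar k1) n k2))
                       (f_dvd (tvar k1) r k2)))).

(* w = u mod m  (k fresh) *)
Definition f_rem (u m w : term) (k : nat) : form :=
  fand (fbex k u (feq u (tadd (tmul (tvar k) m) w))) (f_lt w m).

(* Goedel's beta-function modulus 1 + (i+1) v *)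
Definition beta_mod (i v : term) : term := tadd tone (tmul (tadd i tone) v).

(* z = x^y, the standard Sigma_1 (Delta_1 in I Sigma_1) definition of
   exponentiation through Goedel's beta function:
   exists u v, beta(u,v,0) = 1 /\ (forall i < y, beta(u,v,i+1) = beta(u,v,i)*x)
               /\ beta(u,v,y) = z.   (u v i w1 w2 k fresh) *)
Definition f_exp (x y z : term) (u v i w1 w2 k : nat) : form :=
  fex u (fex v (fand (f_rem (tvar u) (beta_mod tzero (tvar v)) tone k)
   (fand (fball i y (fimp (f_lt (tvar i) y)
           (fbex w1 (tvar u) (fbex w2 (tvar u)
             (fand (f_rem (tvar u) (beta_mod (tvar i) (tvar v)) (tvar w1) k)
              (fand (f_rem (tvar u) (beta_mod (tadd (tvar i) tone) (tvar v)) (tvar w2) k)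
                    (feq (tvar w2) (tmul (tvar w1) x))))))))
         (f_rem (tvar u) (beta_mod y (tvar v)) z k)))).

(* abc with exponent 1+1/3 and constant K:
   forall a b c r, a>0 /\ b>0 /\ a+b=c /\ a,b,c pairwise coprime /\ r = rad(abc)
                   -> c^3 < K^3 * r^4     (i.e. c < K rad(abc)^(4/3)) *)
Definition abc_sentence (K : nat) : form :=
  let a := tvar 0 in let b := tvar 1 in let c := tvar 2 in let r := tvar 3 in
  fall 0 (fall 1 (fall 2 (fall 3
   (fimp (fand (f_lt tzero a) (fand (f_lt tzero b) (fand (feq (tadd a b) c)
          (fand (f_coprime a b 10 11) (fand (f_coprime a c 10 11)
          (fand (f_coprime b c 10 11) (f_rad (tmul (tmul a b) c) r 10 11 12)))))))
         (f_lt (tmul (tmul c c) c)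
               (tmul (tnum (K * K * K)) (tmul (tmul (tmul r r) r) r))))))).

Definition catalan_sentence : form :=
  let x := tvar 0 in let y := tvar 1 in let a := tvar 2 in let b := tvar 3 in
  let z := tvar 4 in let w := tvar 5 in
  fall 0 (fall 1 (fall 2 (fall 3 (fall 4 (fall 5
   (fimp (fand (f_lt tone x) (fand (f_lt tone y) (fand (f_lt tone a) (fand (f_lt tone b)
          (fand (f_exp x a z 10 11 12 13 14 15) (fand (f_exp y b w 10 11 12 13 14 15)
                (feq z (tadd w tone))))))))
         (fand (feq x (tnum 3)) (fand (feq a (tnum 2))
               (fand (feq y (tnum 2)) (feq b (tnum 3))))))))))).

Definition ltB (M : Lstr) (x y : M) : Prop := le M x y /\ x <> y.

Fixpoint nsum (M : Lstr) (n : nat) (y : M) : M :=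
  match n with 0 => zer M | S n => add M (nsum M n y) y end.

Definition PrSubstructure (B : Lstr) (inA : B -> Prop) : Prop :=
  inA (zer B) /\ inA (one B) /\
  (forall x y, inA x -> inA y -> inA (add B x y)) /\
  (forall x y, inA x -> inA y -> inA (mul B x y)) /\
  (forall z, inA z -> zer B <> add B z (one B)) /\
  (forall x, inA x -> x <> zer B -> exists z, inA z /\ x = add B z (one B)) /\
  (forall x y z, inA x -> inA y -> inA z -> add B x z = add B y z -> x = y) /\
  (forall x, inA x -> add B x (zer B) = x) /\
  (forall x y z, inA x -> inA y -> inA z -> add B (add B x y) z = add B x (add B y z)) /\
  (forall x y, inA x -> inA y -> add B x y = add B y x) /\
  (forall x y, inA x -> inA y -> (le B x y <-> exists z, inA z /\ add B x z = y)) /\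
  (forall n : nat, 0 < n -> forall x, inA x ->
     exists y, inA y /\ le B (nsum B n y) x /\ ltB B x (nsum B n (add B y (one B)))).

(* Exp' for <B, e>, with e : B x A -> B (values of e at second arguments
   outside A are irrelevant) *)
Definition ExpPrime (B : Lstr) (inA : B -> Prop) (e : B -> B -> B) : Prop :=
  PrSubstructure B inA /\
  (forall x y, inA y -> (x = one B \/ y = zer B) <-> e x y = one B) /\
  (forall x y, inA y -> x <> zer B -> e x y <> zer B) /\
  (forall x, e x (one B) = x) /\
  (forall x y z, inA y -> inA z -> e x (add B y z) = mul B (e x y) (e x z)).

Definition two (B : Lstr) : B := add B (one B) (one B).
Definition three (B : Lstr) : B := add B (two B) (one B).

Definition CatalanFor (B : Lstr) (inA : B -> Prop) (e : B -> B -> B) : Prop :=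
  forall x y a b : B, inA a -> inA b ->
    ltB B (one B) x -> ltB B (one B) y -> ltB B (one B) a -> ltB B (one B) b ->
    e x a = add B (e y b) (one B) ->
    x = three B /\ a = two B /\ y = two B /\ b = three B.

(* Main.v *)
Require Import Defs.
From Stdlib Require Import Bool Arith Lia FunctionalExtensionality Classical.

Fixpoint tocc (n : nat) (t : term) : bool :=
  match t with
  | tvar i => Nat.eqb i n
  | tadd s u | tmul s u => tocc n s || tocc n u
  | _ => false end.

Fixpoint occ (n : nat) (p : form) : bool :=
  match p with
  | feq s t | fle s t => tocc n s || tocc n t
  | fbot => false
  | fimp p q | fand p q | f_or p q => occ n p || occ n q
  | fall i p | fex i p => Nat.eqb i n || occ n p
  | fball i t p | fbex i t p => Nat.eqb i n || tocc n t || occ n p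
  end.

Lemma upd_same {M : Lstr} (r : nat -> M) i d : upd r i d i = d.
Proof. unfold upd. rewrite Nat.eqb_refl. reflexivity. Qed.

Lemma upd_other {M : Lstr} (r : nat -> M) i j d : j <> i -> upd r i d j = r j.
Proof. intro H. unfold upd. apply Nat.eqb_neq in H. rewrite H. reflexivity. Qed.

Lemma upd_swap {M : Lstr} (r : nat -> M) i j a b : i <> j ->
  upd (upd r i a) j b = upd (upd r j b) i a.
Proof.
  intro H. apply functional_extensionality. intro k. unfold upd.
  destruct (Nat.eqb_spec k j); destruct (Nat.eqb_spec k i); subst; auto. congruence.
Qed.

Lemma upd_upd {M : Lstr} (r : nat -> M) i a b : upd (upd r i a) i b = upd r i b.
Proof.
  apply functional_extensionality. intro k. unfold upd.
  destruct (Nat.eqb_spec k i); auto.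
Qed.

Lemma eval_notocc {M : Lstr} (r : nat -> M) n d t : tocc n t = false ->
  eval M (upd r n d) t = eval M r t.
Proof.
  induction t; simpl; intro H; auto.
  - apply upd_other. apply Nat.eqb_neq. auto.
  - apply Bool.orb_false_iff in H. destruct H. rewrite IHt1, IHt2; auto.
  - apply Bool.orb_false_iff in H. destruct H. rewrite IHt1, IHt2; auto.
Qed.

Lemma sat_notocc {M : Lstr} n d p : occ n p = false -> forall r : nat -> M,
  sat M (upd r n d) p <-> sat M r p.
Proof.
  induction p; simpl; intros H r;
  repeat match goal with H : orb _ _ = false |- _ => apply Bool.orb_false_iff in H; destruct H end.
  - rewrite !eval_notocc; tauto.
  - rewrite !eval_notocc; tauto.
  - tauto.
  - rewrite IHp1, IHp2; tauto.
  - rewrite IHp1, IHp2; tauto.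
  - rewrite IHp1, IHp2; tauto.
  - apply Nat.eqb_neq in H. split; intros G d'; specialize (G d').
    + rewrite upd_swap in G by auto. apply IHp; auto.
    + rewrite upd_swap by auto. apply IHp; auto.
  - apply Nat.eqb_neq in H. split; intros [d' G]; exists d'.
    + rewrite upd_swap in G by auto. apply IHp; auto.
    + rewrite upd_swap by auto. apply IHp; auto.
  - apply Nat.eqb_neq in H. rewrite eval_notocc by auto. split; intros G d' Hd; specialize (G d' Hd).
    + rewrite upd_swap in G by auto. apply IHp; auto.
    + rewrite upd_swap by auto. apply IHp; auto.
  - apply Nat.eqb_neq in H. rewrite eval_notocc by auto. split; intros [d' [Hd G]]; exists d'; split; auto.
    + rewrite upd_swap in G by auto. apply IHp; auto.
    + rewrite upd_swap by auto. apply IHp; auto.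
Qed.

From Stdlib Require Import Bool Arith Lia FunctionalExtensionality Classical Ring.

Section Arith.
Variable M : Lstr.
Hypothesis HI : ISigma1 M.
Local Infix "⊕" := (add M) (at level 50, left associativity).
Local Infix "⊗" := (mul M) (at level 40, left associativity).
Local Notation "0'" := (zer M).
Local Notation "1'" := (one M).

Lemma A1 x : x ⊕ 1' <> 0'. Proof. destruct HI as [H _]; auto. Qed.
Lemma A2 x y : x ⊕ 1' = y ⊕ 1' -> x = y. Proof. destruct HI as [_ [H _]]; auto. Qed.
Lemma A3 x : x <> 0' -> exists y, x = y ⊕ 1'. Proof. destruct HI as [_ [_ [H _]]]; auto. Qed.
Lemma A4 x : x ⊕ 0' = x. Proof. destruct HI as [_ [_ [_ [H _]]]]; auto. Qed.
Lemma A5 x y : x ⊕ (y ⊕ 1') = (x ⊕ y) ⊕ 1'. Proof. destruct HI as [_ [_ [_ [_ [H _]]]]]; auto. Qed.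
Lemma A6 x : x ⊗ 0' = 0'. Proof. destruct HI as [_ [_ [_ [_ [_ [H _]]]]]]; auto. Qed.
Lemma A7 x y : x ⊗ (y ⊕ 1') = x ⊗ y ⊕ x. Proof. destruct HI as [_ [_ [_ [_ [_ [_ [H _]]]]]]]; auto. Qed.
Lemma A8 x y : le M x y <-> exists z, x ⊕ z = y. Proof. destruct HI as [_ [_ [_ [_ [_ [_ [_ [H _]]]]]]]]; auto. Qed.

Lemma IND i (p : form) (r : nat -> M) (P : M -> Prop) : sigma1 p ->
  (forall d, sat M (upd r i d) p <-> P d) -> P 0' -> (forall d, P d -> P (d ⊕ 1')) ->
  forall d, P d.
Proof.
  intros Hs Hiff H0 HS d. apply Hiff.
  destruct HI as [_ [_ [_ [_ [_ [_ [_ [_ H]]]]]]]].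
  apply H; auto.
  - apply Hiff; auto.
  - intros d' Hd'. apply Hiff. apply HS. apply Hiff. auto.
Qed.

Definition env (a b c : M) : nat -> M :=
  fun j => match j with 1 => a | 2 => b | 3 => c | _ => 0' end.

Ltac sig1 := repeat apply s1_ex; apply s1_d0; repeat constructor.
Ltac ind0 p a b c := refine (IND 0 p (env a b c) _ _ _ _ _); [sig1 | intro; cbn; reflexivity | | ].

Lemma add_0_l x : 0' ⊕ x = x.
Proof.
  revert x. ind0 (feq (tadd tzero (tvar 0)) (tvar 0)) 0' 0' 0'.
  - apply A4.
  - intros d H. rewrite A5, H. auto.
Qed.

Lemma add_succ_l x y : (x ⊕ 1') ⊕ y = (x ⊕ y) ⊕ 1'.
Proof.
  revert y. ind0 (feq (tadd (tadd (tvar 1) tone) (tvar 0)) (tadd (tadd (tvar 1) (tvar 0)) tone)) x 0' 0'.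
  - rewrite !A4. auto.
  - intros d H. rewrite !A5, H. auto.
Qed.

Lemma add_comm x y : x ⊕ y = y ⊕ x.
Proof.
  revert y. ind0 (feq (tadd (tvar 1) (tvar 0)) (tadd (tvar 0) (tvar 1))) x 0' 0'.
  - rewrite A4, add_0_l. auto.
  - intros d H. rewrite A5, H, add_succ_l. auto.
Qed.

Lemma add_assoc x y z : x ⊕ (y ⊕ z) = (x ⊕ y) ⊕ z.
Proof.
  revert z. ind0 (feq (tadd (tvar 1) (tadd (tvar 2) (tvar 0))) (tadd (tadd (tvar 1) (tvar 2)) (tvar 0))) x y 0'.
  - rewrite !A4. auto.
  - intros d H. rewrite !A5, H. auto.
Qed.

Lemma mul_0_l x : 0' ⊗ x = 0'.
Proof.
  revert x. ind0 (feq (tmul tzero (tvar 0)) tzero) 0' 0' 0'.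
  - apply A6.
  - intros d H. rewrite A7, H, A4. auto.
Qed.

Lemma mul_succ_l x y : (x ⊕ 1') ⊗ y = x ⊗ y ⊕ y.
Proof.
  revert y. ind0 (feq (tmul (tadd (tvar 1) tone) (tvar 0)) (tadd (tmul (tvar 1) (tvar 0)) (tvar 0))) x 0' 0'.
  - rewrite !A6, A4. auto.
  - intros d H. rewrite !A7, H, !A5.
    f_equal. rewrite <- !add_assoc. f_equal. apply add_comm.
Qed.

Lemma mul_comm x y : x ⊗ y = y ⊗ x.
Proof.
  revert y. ind0 (feq (tmul (tvar 1) (tvar 0)) (tmul (tvar 0) (tvar 1))) x 0' 0'.
  - rewrite A6, mul_0_l. auto.
  - intros d H. rewrite A7, H, mul_succ_l. auto.
Qed.

Lemma mul_add_r x y z : x ⊗ (y ⊕ z) = x ⊗ y ⊕ x ⊗ z.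
Proof.
  revert z. ind0 (feq (tmul (tvar 1) (tadd (tvar 2) (tvar 0))) (tadd (tmul (tvar 1) (tvar 2)) (tmul (tvar 1) (tvar 0)))) x y 0'.
  - rewrite A4, A6, A4. auto.
  - intros d H. rewrite A5, !A7, H, add_assoc. auto.
Qed.

Lemma mul_assoc x y z : x ⊗ (y ⊗ z) = (x ⊗ y) ⊗ z.
Proof.
  revert z. ind0 (feq (tmul (tvar 1) (tmul (tvar 2) (tvar 0))) (tmul (tmul (tvar 1) (tvar 2)) (tvar 0))) x y 0'.
  - rewrite !A6. auto.
  - intros d H. rewrite !A7, mul_add_r, H. auto.
Qed.

Lemma mul_1_l x : 1' ⊗ x = x.
Proof. rewrite <- (add_0_l 1'), mul_succ_l, mul_0_l, add_0_l. auto. Qed.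

Lemma Msrt : semi_ring_theory 0' 1' (add M) (mul M) (@eq M).
Proof.
  constructor.
  - apply add_0_l.
  - apply add_comm.
  - apply add_assoc.
  - apply mul_1_l.
  - apply mul_0_l.
  - apply mul_comm.
  - apply mul_assoc.
  - intros. rewrite mul_comm, mul_add_r, !(mul_comm p). auto.
Qed.

Add Ring Mring : Msrt.


Local Notation "x ≤ y" := (le M x y) (at level 70).
Local Notation "x < y" := (ltB M x y) (at level 70).

Lemma add_cancel x y z : x ⊕ z = y ⊕ z -> x = y.
Proof.
  revert z. ind0 (fimp (feq (tadd (tvar 1) (tvar 0)) (tadd (tvar 2) (tvar 0))) (feq (tvar 1) (tvar 2))) x y 0'.
  - rewrite !A4. auto.
  - intros d H E. rewrite !A5 in E. apply A2 in E. auto.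
Qed.

Lemma add_cancel_l x y z : z ⊕ x = z ⊕ y -> x = y.
Proof. rewrite !(add_comm z). apply add_cancel. Qed.

Lemma add_eq_0 x y : x ⊕ y = 0' -> x = 0' /\ y = 0'.
Proof.
  intro H. destruct (classic (y = 0')) as [Hy|Hy].
  - subst. rewrite A4 in H. auto.
  - destruct (A3 _ Hy) as [y' ->]. rewrite A5 in H. exfalso. eapply A1; eauto.
Qed.

Lemma add_self_0 x y : x ⊕ y = x -> y = 0'.
Proof. intro H. apply (add_cancel_l _ _ x). rewrite A4. auto. Qed.

Lemma le_refl x : x ≤ x.
Proof. apply A8. exists 0'. apply A4. Qed.

Lemma le_add_r x y : x ≤ x ⊕ y.
Proof. apply A8. eauto. Qed.

Lemma le_add_l x y : x ≤ y ⊕ x.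
Proof. rewrite add_comm. apply le_add_r. Qed.

Lemma le_0_l x : 0' ≤ x.
Proof. apply A8. exists x. apply add_0_l. Qed.

Lemma le_trans x y z : x ≤ y -> y ≤ z -> x ≤ z.
Proof.
  intros H1 H2. apply A8 in H1. apply A8 in H2. destruct H1 as [a Ha]. destruct H2 as [b Hb].
  apply A8. exists (a ⊕ b). subst. ring.
Qed.

Lemma le_antisym x y : x ≤ y -> y ≤ x -> x = y.
Proof.
  intros H1 H2. apply A8 in H1. apply A8 in H2. destruct H1 as [a Ha]. destruct H2 as [b Hb].
  subst. assert (a ⊕ b = 0'). { apply (add_self_0 x). rewrite <- Hb at 2. ring. }
  apply add_eq_0 in H. destruct H; subst. rewrite A4. auto.
Qed.

Lemma le_total x y : x ≤ y \/ y ≤ x.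
Proof.
  assert (forall y, (exists k, k ≤ y /\ x ⊕ k = y) \/ (exists k, k ≤ x /\ y ⊕ k = x)).
  { ind0 (f_or (fbex 2 (tvar 0) (feq (tadd (tvar 1) (tvar 2)) (tvar 0)))
                (fbex 2 (tvar 1) (feq (tadd (tvar 0) (tvar 2)) (tvar 1)))) x 0' 0'.
    - right. exists x. split. apply le_refl. apply add_0_l.
    - intros d [[k [Hk E]]|[k [Hk E]]].
      + left. exists (k ⊕ 1'). split.
        * apply A8 in Hk. destruct Hk as [z Hz]. apply A8. exists z. rewrite <- Hz. ring.
        * rewrite <- E. ring.
      + destruct (classic (k = 0')) as [Hk0|Hk0].
        * subst. left. exists 1'. split. apply le_add_l. rewrite A4. auto.
        * destruct (A3 _ Hk0) as [k' ->]. right. exists k'. split.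
          -- eapply le_trans; [|apply Hk]. apply le_add_r.
          -- rewrite <- E. ring. }
  destruct (H y) as [[k [_ E]]|[k [_ E]]]; [left|right]; apply A8; eauto.
Qed.

Lemma le_0_eq x : x ≤ 0' -> x = 0'.
Proof. intro H. apply le_antisym; auto. apply le_0_l. Qed.

Lemma le_succ_cases x y : x ≤ y ⊕ 1' -> x ≤ y \/ x = y ⊕ 1'.
Proof.
  intro H. apply A8 in H. destruct H as [k E]. destruct (classic (k = 0')) as [Hk0|Hk0].
  - subst. rewrite A4 in E. auto.
  - destruct (A3 _ Hk0) as [k' ->]. left. apply A8. exists k'. apply A2. rewrite <- E. ring.
Qed.

Lemma lt_succ_le x y : x < y <-> x ⊕ 1' ≤ y.
Proof.
  split.
  - intros [H1 H2]. apply A8 in H1. destruct H1 as [k E]. destruct (classic (k = 0')) as [Hk0|Hk0].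
    + subst. rewrite A4 in H2. tauto.
    + destruct (A3 _ Hk0) as [k' ->]. apply A8. exists k'. rewrite <- E. ring.
  - intro H. apply A8 in H. destruct H as [k E]. split.
    + apply A8. exists (1' ⊕ k). rewrite <- E. ring.
    + intro F. rewrite <- F in E. assert (1' ⊕ k = 0'). { apply (add_self_0 x). rewrite <- E at 2. ring. }
      rewrite add_comm in H. eapply A1; eauto.
Qed.

Lemma lt_irrefl x : ~ x < x.
Proof. intros [_ H]. auto. Qed.

Lemma not_lt x y : ~ x < y -> y ≤ x.
Proof.
  intro H. destruct (le_total x y) as [H1|H1]; auto.
  destruct (classic (x = y)). subst. apply le_refl. exfalso. apply H. split; auto.
Qed.

Lemma lt_not_le x y : x < y -> ~ y ≤ x.
Proof. intros [H1 H2] H3. apply H2. apply le_antisym; auto. Qed.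

Lemma lt_le x y : x < y -> x ≤ y.
Proof. intros [H _]; auto. Qed.

Lemma le_lt_trans x y z : x ≤ y -> y < z -> x < z.
Proof.
  intros H1 H2. apply lt_succ_le in H2. apply lt_succ_le. eapply le_trans; [|apply H2].
  apply A8 in H1. destruct H1 as [k E]. apply A8. exists k. rewrite <- E. ring.
Qed.

Lemma lt_le_trans x y z : x < y -> y ≤ z -> x < z.
Proof. intros H1 H2. apply lt_succ_le in H1. apply lt_succ_le. eapply le_trans; eauto. Qed.

Lemma lt_succ x : x < x ⊕ 1'.
Proof. apply lt_succ_le. apply le_refl. Qed.

Lemma le_lt_succ x y : x ≤ y -> x < y ⊕ 1'.
Proof. intro H. eapply le_lt_trans; eauto. apply lt_succ. Qed.

Lemma lt_succ_le' x y : x < y ⊕ 1' -> x ≤ y.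
Proof. intro H. apply lt_succ_le in H. apply A8 in H. destruct H as [k E]. apply A8. exists k. apply A2. rewrite <- E. ring. Qed.

Lemma ne0_ge1 x : x <> 0' -> 1' ≤ x.
Proof. intro H. destruct (A3 _ H) as [y ->]. apply le_add_l. Qed.

Lemma lt_0_ne x : 0' < x -> x <> 0'.
Proof. intros [_ H] E. subst. auto. Qed.

Lemma add_le_mono a b c d : a ≤ b -> c ≤ d -> a ⊕ c ≤ b ⊕ d.
Proof.
  intros H1 H2. apply A8 in H1. apply A8 in H2. destruct H1 as [k Hk]. destruct H2 as [l Hl].
  apply A8. exists (k ⊕ l). subst. ring.
Qed.

Lemma add_le_cancel a b c : a ⊕ c ≤ b ⊕ c -> a ≤ b.
Proof.
  intro H. apply A8 in H. destruct H as [k E]. apply A8. exists k. apply (add_cancel _ _ c).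
  rewrite <- E. ring.
Qed.

Lemma mul_le_mono a b c d : a ≤ b -> c ≤ d -> a ⊗ c ≤ b ⊗ d.
Proof.
  intros H1 H2. apply A8 in H1. apply A8 in H2. destruct H1 as [k Hk]. destruct H2 as [l Hl].
  apply A8. exists (a ⊗ l ⊕ k ⊗ c ⊕ k ⊗ l). subst. ring.
Qed.

Lemma mul_lt_mono x y z : z <> 0' -> x < y -> x ⊗ z < y ⊗ z.
Proof.
  intros Hz H. apply lt_succ_le in H. apply lt_succ_le.
  apply (le_trans _ ((x ⊕ 1') ⊗ z)).
  - rewrite mul_succ_l. apply add_le_mono. apply le_refl. apply ne0_ge1; auto.
  - apply mul_le_mono; auto. apply le_refl.
Qed.

Lemma mul_le_cancel x y z : z <> 0' -> x ⊗ z ≤ y ⊗ z -> x ≤ y.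
Proof.
  intros Hz H. apply not_lt. intro H'. apply (mul_lt_mono _ _ z) in H'; auto.
  apply lt_not_le in H'. auto.
Qed.

Lemma mul_cancel x y z : z <> 0' -> x ⊗ z = y ⊗ z -> x = y.
Proof.
  intros Hz H. apply le_antisym; apply (mul_le_cancel _ _ z); auto; rewrite H; apply le_refl.
Qed.

Lemma mul_eq_0 x y : x ⊗ y = 0' -> x = 0' \/ y = 0'.
Proof.
  intro H. destruct (classic (x = 0')); auto. destruct (classic (y = 0')); auto.
  destruct (A3 _ H0) as [x' ->]. destruct (A3 _ H1) as [y' ->].
  exfalso. apply (A1 (x' ⊗ y' ⊕ x' ⊕ y')). rewrite <- H. ring.
Qed.

Lemma mul_ne_0 x y : x <> 0' -> y <> 0' -> x ⊗ y <> 0'.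
Proof. intros H1 H2 E. apply mul_eq_0 in E. tauto. Qed.

Lemma le_mul_r x y : y <> 0' -> x ≤ x ⊗ y.
Proof.
  intro H. rewrite <- (mul_1_l x) at 1. rewrite (mul_comm 1'). apply mul_le_mono. apply le_refl.
  apply ne0_ge1; auto.
Qed.

Lemma one_ne_0 : 1' <> 0'.
Proof. rewrite <- (add_0_l 1'). apply A1. Qed.

Lemma lt_0_1 : 0' < 1'.
Proof. split. apply le_0_l. intro H. apply one_ne_0. auto. Qed.

Definition dvd (d u : M) : Prop := exists k, d ⊗ k = u.

Lemma dvd_refl x : dvd x x.
Proof. exists 1'. ring. Qed.

Lemma dvd_trans a b c : dvd a b -> dvd b c -> dvd a c.
Proof. intros [k Hk] [l Hl]. exists (k ⊗ l). subst. ring. Qed.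

Lemma dvd_mul_r a b c : dvd a b -> dvd a (b ⊗ c).
Proof. intros [k Hk]. exists (k ⊗ c). subst. ring. Qed.

Lemma dvd_mul_l a b c : dvd a b -> dvd a (c ⊗ b).
Proof. intros H. rewrite mul_comm. apply dvd_mul_r; auto. Qed.

Lemma dvd_factor a b : dvd a (a ⊗ b).
Proof. exists b. auto. Qed.

Lemma dvd_add a b c : dvd a b -> dvd a c -> dvd a (b ⊕ c).
Proof. intros [k Hk] [l Hl]. exists (k ⊕ l). subst. ring. Qed.

Lemma dvd_0 a : dvd a 0'.
Proof. exists 0'. ring. Qed.

Lemma dvd_le d u : dvd d u -> u <> 0' -> d ≤ u.
Proof.
  intros [k Hk] Hu. subst. apply le_mul_r. intro E. subst. apply Hu. ring.
Qed.

Lemma dvd_sub p a b : dvd p (a ⊕ b) -> dvd p a -> dvd p b.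
Proof.
  intros [k Hk] [j Hj]. destruct (classic (p = 0')) as [Hp|Hp].
  - subst. rewrite mul_0_l in *. symmetry in Hk. apply add_eq_0 in Hk. destruct Hk. subst. apply dvd_0.
  - assert (j ≤ k). { apply (mul_le_cancel _ _ p); auto. rewrite !(mul_comm _ p), Hj, Hk. apply le_add_r. }
    apply A8 in H. destruct H as [l El]. exists l. subst k. apply (add_cancel_l _ _ (p ⊗ j)).
    rewrite <- mul_add_r, Hk, Hj. auto.
Qed.

Lemma dvd_1 d : dvd d 1' -> d = 1'.
Proof.
  intros [k Hk]. assert (d <> 0'). { intro E. subst. rewrite mul_0_l in Hk. apply one_ne_0; auto. }
  assert (k <> 0'). { intro E. subst. rewrite A6 in Hk. apply one_ne_0; auto. }
  apply le_antisym.
  - rewrite <- Hk. apply le_mul_r; auto.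
  - apply ne0_ge1; auto.
Qed.

Lemma LNP (p : form) (r : nat -> M) (P : M -> Prop) : delta0 p -> occ 9 p = false ->
  (forall d, sat M (upd r 0 d) p <-> P d) -> (exists d, P d) ->
  exists d, P d /\ forall d', d' < d -> ~ P d'.
Proof.
  intros Hd Ho Hiff [d0 Hd0]. apply NNPP. intro Hn.
  assert (forall n d, d ≤ n -> ~ P d).
  { refine (IND 9 (fball 0 (tvar 9) (fimp p fbot)) r (fun n => forall d, d ≤ n -> ~ P d) _ _ _ _).
    - constructor. constructor. constructor; auto. constructor.
    - intro n. cbn [sat eval]. rewrite upd_same. split.
      + intros G d Hdn HP. apply (G d Hdn). rewrite upd_swap by lia. apply sat_notocc; auto. apply Hiff; auto.
      + intros G d Hdn HP. apply (G d Hdn). rewrite upd_swap in HP by lia. apply sat_notocc in HP; auto. apply Hiff; auto.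
    - intros d Hd0' HP. apply le_0_eq in Hd0'. subst. apply Hn. exists 0'. split; auto.
      intros d' Hd'. exfalso. apply (lt_not_le _ _ Hd'). apply le_0_l.
    - intros n IH d Hdn HP. destruct (le_succ_cases _ _ Hdn) as [H1|H1].
      + apply (IH d); auto.
      + subst. apply Hn. exists (n ⊕ 1'). split; auto. intros d' Hd'. apply IH. apply lt_succ_le'; auto. }
  apply (H d0 d0); auto. apply le_refl.
Qed.

Fixpoint numB (n : nat) : M := match n with 0 => 0' | S n => numB n ⊕ 1' end.

Lemma eval_tnum r n : eval M r (tnum n) = numB n.
Proof. induction n; simpl; auto. rewrite IHn. auto. Qed.

Lemma numB_add a b : numB (a + b) = numB a ⊕ numB b.
Proof. induction a; simpl. rewrite add_0_l; auto. rewrite IHa. ring. Qed.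

Lemma numB_mul a b : numB (a * b) = numB a ⊗ numB b.
Proof. induction a; simpl. rewrite mul_0_l; auto. rewrite numB_add, IHa. ring. Qed.

Lemma numB_1 : numB 1 = 1'.
Proof. simpl. apply add_0_l. Qed.

Lemma numB_le a b : (a <= b)%nat -> numB a ≤ numB b.
Proof. intro H. replace b with (a + (b - a))%nat by lia. rewrite numB_add. apply le_add_r. Qed.

Lemma numB_lt a b : (a < b)%nat -> numB a < numB b.
Proof. intro H. apply lt_succ_le. change (numB (S a) ≤ numB b). apply numB_le. lia. Qed.

Lemma numB_le_inv a b : numB a ≤ numB b -> (a <= b)%nat.
Proof. intro H. destruct (le_gt_dec a b); auto. exfalso. apply (lt_not_le _ _ (numB_lt b a g)). auto. Qed.

Lemma numB_inj a b : numB a = numB b -> a = b.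
Proof. intro H. apply Nat.le_antisymm; apply numB_le_inv; rewrite H; apply le_refl. Qed.

Lemma le_numB x n : x ≤ numB n -> exists m, (m <= n)%nat /\ x = numB m.
Proof.
  revert x. induction n; intros x H.
  - apply le_0_eq in H. exists 0%nat. auto.
  - simpl in H. destruct (le_succ_cases _ _ H) as [H1|H1].
    + destruct (IHn _ H1) as [m [Hm ->]]. exists m. split; auto.
    + exists (S n). auto.
Qed.

Lemma lt_numB x n : x < numB n -> exists m, (m < n)%nat /\ x = numB m.
Proof.
  destruct n. intros H. exfalso. apply (lt_not_le _ _ H). apply le_0_l.
  intro H. simpl in H. apply lt_succ_le' in H. destruct (le_numB _ _ H) as [m [Hm ->]]. exists m. split; auto. lia.
Qed.

Lemma nsum_eq n y : nsum M n y = numB n ⊗ y.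
Proof. induction n; simpl. rewrite mul_0_l; auto. rewrite IHn. ring. Qed.

Fixpoint powB (x : M) (n : nat) : M := match n with 0 => 1' | S n => powB x n ⊗ x end.

Lemma powB_add x a b : powB x (a + b) = powB x a ⊗ powB x b.
Proof. induction a; simpl. ring. rewrite IHa. ring. Qed.

Lemma powB_mulb x y n : powB (x ⊗ y) n = powB x n ⊗ powB y n.
Proof. induction n; simpl. ring. rewrite IHn. ring. Qed.

Lemma powB_pow x a b : powB (powB x a) b = powB x (a * b).
Proof. induction b; simpl. rewrite Nat.mul_0_r. auto. rewrite IHb. replace (a * S b)%nat with (a * b + a)%nat by lia. rewrite powB_add. auto. Qed.

Lemma powB_ne0 x n : x <> 0' -> powB x n <> 0'.
Proof. intro H. induction n; simpl. apply one_ne_0. apply mul_ne_0; auto. Qed.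

Lemma powB_1 x : powB x 1 = x.
Proof. simpl. apply mul_1_l. Qed.

Lemma powB_mono_exp x a b : x <> 0' -> (a <= b)%nat -> powB x a ≤ powB x b.
Proof.
  intros Hx H. replace b with (a + (b - a))%nat by lia. rewrite powB_add. apply le_mul_r. apply powB_ne0; auto.
Qed.

Lemma powB_mono_base x y n : x ≤ y -> powB x n ≤ powB y n.
Proof. intro H. induction n; simpl. apply le_refl. apply mul_le_mono; auto. Qed.

Lemma powB_gt x n : 1' < x -> numB n < powB x n.
Proof.
  intro Hx. induction n; simpl.
  - apply lt_0_1.
  - apply lt_succ_le in IHn. apply lt_succ_le in Hx. apply lt_succ_le.
    apply (le_trans _ (powB x n ⊗ (1' ⊕ 1'))).
    + assert (1' ≤ powB x n). { apply ne0_ge1. apply powB_ne0. intro E. subst. apply (lt_not_le _ _ (proj2 (lt_succ_le _ _) Hx)). apply le_0_l. }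
      apply (le_trans _ (powB x n ⊕ 1')). apply add_le_mono; auto. apply le_refl.
      replace (powB x n ⊗ (1' ⊕ 1')) with (powB x n ⊕ powB x n) by ring. apply add_le_mono; auto. apply le_refl.
    + apply mul_le_mono. apply le_refl. auto.
Qed.

Lemma divmod u m : m <> 0' -> exists q rr, u = q ⊗ m ⊕ rr /\ rr < m.
Proof.
  intro Hm. revert u.
  ind0 (fex 2 (fex 3 (fand (feq (tvar 0) (tadd (tmul (tvar 2) (tvar 1)) (tvar 3))) (f_lt (tvar 3) (tvar 1))))) m 0' 0'.
  - exists 0', 0'. split. ring. split. apply le_0_l. auto.
  - intros d [q [rr [E H]]]. apply lt_succ_le in H. destruct (classic (rr ⊕ 1' = m)) as [H0|H0].
    + exists (q ⊕ 1'), 0'. split.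
      * rewrite E, <- H0. ring.
      * split. apply le_0_l. auto.
    + exists q, (rr ⊕ 1'). split. rewrite E. ring. split; auto.
Qed.

Definition primeB (p : M) : Prop := 1' < p /\ forall k, k ≤ p -> dvd k p -> k = 1' \/ k = p.
Definition coprimeB (u v : M) : Prop := forall d, d ≤ u -> dvd d u -> dvd d v -> d = 1'.
Definition sqfB (r : M) : Prop := forall k, k ≤ r -> dvd (k ⊗ k) r -> k = 1'.
Definition radB (n r : M) : Prop :=
  sqfB r /\ dvd r n /\ forall p, p ≤ n -> primeB p /\ dvd p n -> dvd p r.

Lemma sat_f_lt r s t : sat M r (f_lt s t) <-> eval M r s < eval M r t.
Proof. unfold f_lt, ltB. simpl. tauto. Qed.

Lemma dvd_bounded D U : dvd D U <-> exists k, k ≤ U /\ D ⊗ k = U.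
Proof.
  split.
  - intros [k Hk]. destruct (classic (U = 0')) as [HU|HU].
    + exists 0'. split. rewrite HU. apply le_refl. rewrite A6. auto.
    + exists k. split; auto. rewrite <- Hk, mul_comm. apply le_mul_r. intro E. apply HU. rewrite <- Hk, E. apply mul_0_l.
  - intros [k [_ Hk]]. exists k. auto.
Qed.

Lemma sat_f_dvd r d u k : tocc k d = false -> tocc k u = false ->
  (sat M r (f_dvd d u k) <-> dvd (eval M r d) (eval M r u)).
Proof.
  intros H1 H2. unfold f_dvd. simpl. rewrite dvd_bounded.
  split; intros [x [Hx Ex]]; exists x; rewrite !eval_notocc, upd_same in *; auto.
Qed.

Lemma sat_f_prime r t k1 k2 : Nat.eqb k1 k2 = false -> tocc k1 t = false -> tocc k2 t = false ->
  (sat M r (f_prime t k1 k2) <-> primeB (eval M r t)).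
Proof.
  intros H0 H1 H2. unfold f_prime, primeB. cbn [sat]. rewrite sat_f_lt. cbn [eval].
  assert (E: forall x, eval M (upd r k1 x) t = eval M r t) by (intro; apply eval_notocc; auto).
  assert (D: forall x, sat M (upd r k1 x) (f_dvd (tvar k1) t k2) <-> dvd x (eval M r t)).
  { intro. rewrite sat_f_dvd; auto. cbn [eval]. rewrite upd_same, E. tauto. all: simpl; try rewrite Nat.eqb_sym; auto. }
  split; intros [Ha Hb]; split; auto; intros k Hk; specialize (Hb k Hk); cbn [eval] in *;
    rewrite ?D, ?upd_same, ?E in *; auto.
Qed.

Lemma sat_f_coprime r u v k1 k2 : Nat.eqb k1 k2 = false -> tocc k1 u = false -> tocc k2 u = false ->
  tocc k1 v = false -> tocc k2 v = false ->
  (sat M r (f_coprime u v k1 k2) <-> coprimeB (eval M r u) (eval M r v)).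
Proof.
  intros H0 H1 H2 H3 H4. unfold f_coprime, coprimeB. cbn [sat].
  assert (E : forall d, eval M (upd r k1 d) u = eval M r u) by (intro; apply eval_notocc; auto).
  assert (E' : forall d, eval M (upd r k1 d) v = eval M r v) by (intro; apply eval_notocc; auto).
  assert (D: forall x w, tocc k1 w = false -> tocc k2 w = false ->
     sat M (upd r k1 x) (f_dvd (tvar k1) w k2) <-> dvd x (eval M r w)).
  { intros. rewrite sat_f_dvd; auto. cbn [eval]. rewrite upd_same, eval_notocc; auto. tauto. all: simpl; try rewrite Nat.eqb_sym; auto. }
  split; intros G d Hd.
  - specialize (G d Hd). rewrite !D in G; auto. cbn [eval] in G. rewrite upd_same in G. auto.
  - rewrite !D; auto. cbn [eval]. rewrite upd_same. intros [A B]. auto.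
Qed.

Lemma sat_f_rad_intro r : radB (r 0 ⊗ r 1 ⊗ r 2) (r 3) ->
  sat M r (f_rad (tmul (tmul (tvar 0) (tvar 1)) (tvar 2)) (tvar 3) 10 11 12).
Proof.
  intros [Hs [Hd Hp]]. unfold f_rad, f_squarefree. cbn [sat].
  split; [|split].
  - intros k Hk HD. rewrite sat_f_dvd in HD by reflexivity. cbn [eval upd Nat.eqb] in *. auto.
  - rewrite sat_f_dvd by reflexivity. cbn [eval upd Nat.eqb] in *. auto.
  - intros k Hk [HP HD]. rewrite sat_f_prime in HP by reflexivity. rewrite sat_f_dvd in * by reflexivity.
    cbn [eval upd Nat.eqb] in *. auto.
Qed.

Lemma abc_sem K : (forall r, sat M r (abc_sentence K)) -> forall a b c R,
  0' < a -> 0' < b -> a ⊕ b = c -> coprimeB a b -> coprimeB a c -> coprimeB b c ->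
  radB (a ⊗ b ⊗ c) R -> c ⊗ c ⊗ c < numB (K*K*K) ⊗ (R ⊗ R ⊗ R ⊗ R).
Proof.
  intros H a b c R Ha Hb Hc H1 H2 H3 H4. specialize (H (fun _ => 0')). unfold abc_sentence in H.
  cbn [sat] in H. specialize (H a b c R).
  rewrite !sat_f_lt in H. rewrite !sat_f_coprime in H by reflexivity.
  cbn [eval] in H. rewrite eval_tnum in H. cbn [upd Nat.eqb] in H.
  apply H. refine (conj Ha (conj Hb (conj Hc (conj H1 (conj H2 (conj H3 _)))))).
  apply sat_f_rad_intro. cbn [upd Nat.eqb]. auto.
Qed.

Definition remB (U Mo W : M) : Prop := (exists q, q ≤ U /\ U = q ⊗ Mo ⊕ W) /\ W < Mo.
Definition expB (X Y Z : M) : Prop :=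
  exists u v, remB u (1' ⊕ (0' ⊕ 1') ⊗ v) 1' /\
   (forall i, i ≤ Y -> i < Y -> exists w1, w1 ≤ u /\ exists w2, w2 ≤ u /\
      remB u (1' ⊕ (i ⊕ 1') ⊗ v) w1 /\ remB u (1' ⊕ (i ⊕ 1' ⊕ 1') ⊗ v) w2 /\ w2 = w1 ⊗ X) /\
   remB u (1' ⊕ (Y ⊕ 1') ⊗ v) Z.

Lemma sat_exp_A r : expB (r 0) (r 2) (r 4) -> sat M r (f_exp (tvar 0) (tvar 2) (tvar 4) 10 11 12 13 14 15).
Proof. intro H. exact H. Qed.
Lemma sat_exp_B r : expB (r 1) (r 3) (r 5) -> sat M r (f_exp (tvar 1) (tvar 3) (tvar 5) 10 11 12 13 14 15).
Proof. intro H. exact H. Qed.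

Lemma cat_sem : (forall r, sat M r catalan_sentence) -> forall x y a b z w,
  1' < x -> 1' < y -> 1' < a -> 1' < b -> expB x a z -> expB y b w -> z = w ⊕ 1' ->
  x = numB 3 /\ a = numB 2 /\ y = numB 2 /\ b = numB 3.
Proof.
  intros H x y a b z w H1 H2 H3 H4 H5 H6 H7. specialize (H (fun _ => 0')). unfold catalan_sentence in H.
  cbn [sat] in H. specialize (H x y a b z w).
  rewrite !sat_f_lt in H. cbn [eval] in H. rewrite !eval_tnum in H. cbn [upd Nat.eqb] in H.
  apply H. refine (conj H1 (conj H2 (conj H3 (conj H4 (conj _ (conj _ H7)))))).
  - apply sat_exp_A. cbn [upd Nat.eqb]. auto.
  - apply sat_exp_B. cbn [upd Nat.eqb]. auto.
Qed.

Lemma ge1_ne0 x : 1' ≤ x -> x <> 0'.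
Proof. intros H E. subst. apply one_ne_0. apply le_0_eq. auto. Qed.

Lemma prime_ne0 p : primeB p -> p <> 0'.
Proof. intros [[H1 H2] _] E. subst. apply one_ne_0. apply le_0_eq; auto. Qed.

Lemma euclid p a b : primeB p -> dvd p (a ⊗ b) -> dvd p a \/ dvd p b.
Proof.
  intros Hp Hab. destruct (classic (a = 0')) as [Ha0|Ha0]. { left. subst. apply dvd_0. }
  destruct (LNP (fand (fle tone (tvar 0)) (f_dvd (tvar 1) (tmul (tvar 0) (tvar 2)) 3)) (env p b 0')
     (fun t => 1' ≤ t /\ dvd p (t ⊗ b))) as [t0 [[Ht1 Ht2] Hmin]].
  - repeat constructor.
  - reflexivity.
  - intro d. cbn [sat]. rewrite sat_f_dvd by reflexivity. cbn [eval env upd Nat.eqb]. tauto.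
  - exists a. split; auto. apply ne0_ge1; auto.
  - assert (Ht0 : t0 <> 0') by (apply ge1_ne0; auto).
    assert (C : forall t, 1' ≤ t -> dvd p (t ⊗ b) -> dvd t0 t).
    { intros t H1 H2. destruct (divmod t t0 Ht0) as [q [rr [E Hr]]].
      assert (dvd p (rr ⊗ b)).
      { apply (dvd_sub _ (q ⊗ (t0 ⊗ b))). replace (q ⊗ (t0 ⊗ b) ⊕ rr ⊗ b) with (t ⊗ b) by (rewrite E; ring). auto.
        apply dvd_mul_l. auto. }
      destruct (classic (rr = 0')) as [Hr0|Hr0].
      - exists q. rewrite E, Hr0. ring.
      - exfalso. apply (Hmin rr Hr). split; auto. apply ne0_ge1; auto. }
    assert (Hpp : dvd t0 p). { apply C. apply lt_le. apply Hp. apply dvd_factor. }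
    destruct Hp as [Hp1 Hp2]. destruct (Hp2 t0 (dvd_le _ _ Hpp (prime_ne0 p (conj Hp1 Hp2))) Hpp) as [E|E].
    + right. subst. rewrite mul_1_l in Ht2. auto.
    + left. subst. apply C; auto. apply ne0_ge1; auto.
Qed.

Lemma prime_dvd_pow p x n : primeB p -> dvd p (powB x n) -> dvd p x.
Proof.
  intros Hp. induction n; simpl; intro H.
  - apply dvd_1 in H. subst. destruct Hp as [[_ H] _]. tauto.
  - destruct (euclid _ _ _ Hp H); auto.
Qed.

Lemma rad_exists N C : N <> 0' -> 1' ≤ C -> dvd C N -> (forall p, primeB p -> dvd p N -> dvd p C) ->
  exists R, radB N R /\ R ≤ C.
Proof.
  intros HN HC1 HC2 HC3.
  destruct (LNP (fand (fle tone (tvar 0)) (fand (f_dvd (tvar 0) (tvar 1) 5)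
     (fball 2 (tvar 1) (fimp (fand (f_prime (tvar 2) 3 4) (f_dvd (tvar 2) (tvar 1) 3)) (f_dvd (tvar 2) (tvar 0) 3)))))
     (env N 0' 0')
     (fun r => 1' ≤ r /\ dvd r N /\ forall p, p ≤ N -> primeB p /\ dvd p N -> dvd p r)) as [R [[HR1 [HR2 HR3]] Hmin]].
  - repeat constructor.
  - reflexivity.
  - intro d. cbn [sat]. rewrite sat_f_dvd by reflexivity. cbn [eval env upd Nat.eqb].
    split; intros [h1 [h2 h3]]; split; auto; split; auto; intros p Hp; specialize (h3 p Hp);
    rewrite sat_f_prime, !sat_f_dvd in * by reflexivity; cbn [eval env upd Nat.eqb] in *; auto.
  - exists C. split; auto. split; auto. intros p _ [Hp1 Hp2]. auto.
  - exists R. split.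
    + split; [|split]; auto.
      intros k Hk Hkk. apply NNPP. intro Hk1.
      assert (Hk0 : k <> 0'). { intro E. subst. destruct Hkk as [z Hz]. rewrite !mul_0_l in Hz. apply (ge1_ne0 R); auto. }
      destruct Hkk as [t Ht].
      assert (Hs : k ⊗ t <> 0'). { intro E. apply (ge1_ne0 R); auto. rewrite <- Ht. rewrite <- mul_assoc, E. ring. }
      apply (Hmin (k ⊗ t)).
      * apply lt_succ_le. rewrite <- Ht.
        assert (1' ⊕ 1' ≤ k).
        { apply (proj1 (lt_succ_le 1' k)). split. apply ne0_ge1; auto. intro E. apply Hk1. auto. }
        apply (le_trans _ ((1' ⊕ 1') ⊗ (k ⊗ t))).
        -- replace ((1' ⊕ 1') ⊗ (k ⊗ t)) with (k ⊗ t ⊕ k ⊗ t) by ring. apply add_le_mono. apply le_refl. apply ne0_ge1; auto.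
        -- rewrite <- mul_assoc. apply mul_le_mono; auto. apply le_refl.
      * split. apply ne0_ge1; auto. split.
        -- apply (dvd_trans _ R); auto. exists k. rewrite <- Ht. ring.
        -- intros p Hp HpN. assert (dvd p (k ⊗ (k ⊗ t))). { rewrite mul_assoc, Ht. auto. }
           destruct (euclid _ _ _ (proj1 HpN) H); auto. apply dvd_mul_r. auto.
    + apply not_lt. intro H. apply (Hmin C H). split; auto. split; auto. intros p _ [Hp1 Hp2]. auto.
Qed.

Lemma all_div N : exists v, 1' ≤ v /\ forall j, j ≤ N -> 1' ≤ j -> dvd j v.
Proof.
  revert N.
  refine (IND 0 (fex 1 (fand (fle tone (tvar 1)) (fball 2 (tvar 0) (fimp (fle tone (tvar 2)) (f_dvd (tvar 2) (tvar 1) 3)))))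
    (env 0' 0' 0') (fun N => exists v, 1' ≤ v /\ forall j, j ≤ N -> 1' ≤ j -> dvd j v) _ _ _ _).
  - sig1.
  - intro d. cbn [sat]. split; intros [v [h1 h2]]; exists v; split; auto; intros j Hj; specialize (h2 j Hj);
    rewrite sat_f_dvd in * by reflexivity; cbn [eval env upd Nat.eqb] in *; auto.
  - exists 1'. split. apply le_refl. intros j Hj H1. exfalso. apply (ge1_ne0 j); auto. apply le_0_eq; auto.
  - intros d [v [h1 h2]]. exists (v ⊗ (d ⊕ 1')). split.
    + apply ne0_ge1. apply mul_ne_0. apply ge1_ne0; auto. apply A1.
    + intros j Hj H1. destruct (le_succ_cases _ _ Hj) as [E|E].
      * apply dvd_mul_r. auto.
      * subst. apply dvd_mul_l. apply dvd_refl.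
Qed.

Section Beta.
Variable x : M.
Hypothesis Hx : x <> 0'.
Variable n : nat.
Variable v : M.
Hypothesis Hv1 : 1' ≤ v.
Hypothesis Hv2 : forall j, j ≤ powB x n ⊕ numB n -> 1' ≤ j -> dvd j v.

Definition mm (i : nat) : M := 1' ⊕ (numB i ⊕ 1') ⊗ v.

Lemma mm_ne0 i : mm i <> 0'. Proof. unfold mm. rewrite add_comm. apply A1. Qed.

Lemma v_big : powB x n ⊕ numB n ≤ v.
Proof.
  apply dvd_le. apply Hv2. apply le_refl. apply (le_trans _ (powB x n)). apply ne0_ge1. apply powB_ne0; auto.
  apply le_add_r. apply ge1_ne0; auto.
Qed.


Lemma pow_lt_mm i : (i <= n)%nat -> powB x i < mm i.
Proof.
  intro H. unfold mm. rewrite add_comm. apply le_lt_succ.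
  apply (le_trans _ v).
  - apply (le_trans _ (powB x n)). apply powB_mono_exp; auto.
    apply (le_trans _ (powB x n ⊕ numB n)). apply le_add_r. apply v_big.
  - rewrite mul_comm. apply le_mul_r. first [apply A1 | rewrite add_comm; apply A1].
Qed.

Lemma inv_pair i j : (i < j)%nat -> (j <= n)%nat -> exists y h, mm i ⊗ y = 1' ⊕ h ⊗ mm j.
Proof.
  intros Hij Hjn. set (t := (j - i)%nat).
  assert (Ht : dvd (numB t) v).
  { apply Hv2. apply (le_trans _ (numB n)). apply numB_le. unfold t. lia. apply le_add_l.
    rewrite <- numB_1. apply numB_le. unfold t. lia. }
  destruct Ht as [w Hw].
  destruct (A3 v (ge1_ne0 _ Hv1)) as [v0 Hv0].
  assert (Ej : numB j = numB i ⊕ numB t) by (rewrite <- numB_add; f_equal; unfold t; lia).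
  set (V := (numB j ⊕ 1') ⊗ v). set (V0 := (numB j ⊕ 1') ⊗ v0 ⊕ numB j).
  set (W := w ⊗ (numB j ⊕ 1')).
  exists ((numB j ⊕ 1') ⊗ W ⊗ V), ((numB i ⊕ 1') ⊗ W ⊗ V ⊕ V0).
  assert (E1 : (numB j ⊕ 1') ⊗ mm i = (numB i ⊕ 1') ⊗ mm j ⊕ numB t).
  { unfold mm. rewrite Ej. ring. }
  assert (E2 : numB t ⊗ W ⊗ V = V ⊗ V).
  { unfold W, V. rewrite <- Hw. ring. }
  assert (E3 : V ⊗ V = 1' ⊕ V0 ⊗ mm j).
  { unfold V, V0, mm. rewrite Hv0. ring. }
  transitivity (((numB j ⊕ 1') ⊗ mm i) ⊗ W ⊗ V). ring.
  rewrite E1. transitivity ((numB i ⊕ 1') ⊗ W ⊗ V ⊗ mm j ⊕ numB t ⊗ W ⊗ V). ring.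
  rewrite E2, E3. ring.
Qed.

Fixpoint LL (k : nat) : M := match k with 0 => mm 0 | S k => LL k ⊗ mm (S k) end.

Lemma LL_inv k j : (k < j)%nat -> (j <= n)%nat -> exists Y H, LL k ⊗ Y = 1' ⊕ H ⊗ mm j.
Proof.
  induction k; intros Hk Hj.
  - apply inv_pair; auto.
  - destruct IHk as [Y1 [H1 E1]]; try lia. destruct (inv_pair (S k) j) as [y2 [h2 E2]]; auto.
    exists (Y1 ⊗ y2), (H1 ⊕ h2 ⊕ H1 ⊗ h2 ⊗ mm j). simpl.
    transitivity ((LL k ⊗ Y1) ⊗ (mm (S k) ⊗ y2)). ring. rewrite E1, E2. ring.
Qed.

Lemma LL_dvd i k : (i <= k)%nat -> dvd (mm i) (LL k).
Proof.
  induction k; intro H.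
  - replace i with 0%nat by lia. apply dvd_refl.
  - simpl. destruct (Nat.eq_dec i (S k)) as [E|E].
    + subst. apply dvd_mul_l. apply dvd_refl.
    + apply dvd_mul_r. apply IHk. lia.
Qed.

Lemma crt k : (k <= n)%nat -> exists u, forall i, (i <= k)%nat -> exists q, u = q ⊗ mm i ⊕ powB x i.
Proof.
  induction k; intro Hk.
  - exists 1'. intros i Hi. replace i with 0%nat by lia. exists 0'. simpl. ring.
  - destruct IHk as [u Hu]; try lia.
    destruct (divmod u (mm (S k)) (mm_ne0 _)) as [q [rr [Eu Hr]]].
    destruct (proj1 (A8 _ _) (lt_le _ _ Hr)) as [dl Hd].
    destruct (LL_inv k (S k)) as [Y [H EY]]; try lia.
    set (c := powB x (S k)).
    exists (u ⊕ LL k ⊗ (Y ⊗ (c ⊕ dl))).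
    intros i Hi. destruct (Nat.eq_dec i (S k)) as [Ei|Ei].
    + subst i. exists (q ⊕ H ⊗ (c ⊕ dl) ⊕ 1'). fold c.
      transitivity (u ⊕ (LL k ⊗ Y) ⊗ (c ⊕ dl)). ring. rewrite EY, Eu. rewrite <- Hd. ring.
    + destruct (Hu i) as [qi Ei']; try lia. destruct (LL_dvd i k) as [Li ELi]; try lia.
      exists (qi ⊕ Li ⊗ (Y ⊗ (c ⊕ dl))). rewrite Ei', <- ELi. ring.
Qed.

Lemma rem_mm u i : (i <= n)%nat -> (exists q, u = q ⊗ mm i ⊕ powB x i) -> remB u (mm i) (powB x i) /\ powB x i ≤ u.
Proof.
  intros Hi [q Eq]. split; [split|].
  - exists q. split; auto. rewrite Eq. apply (le_trans _ (q ⊗ mm i)). apply le_mul_r. apply mm_ne0. apply le_add_r.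
  - apply pow_lt_mm; auto.
  - rewrite Eq. apply le_add_l.
Qed.

Lemma beta_exp : expB x (numB n) (powB x n).
Proof.
  destruct (crt n (le_n n)) as [u Hu]. exists u, v.
  split; [|split].
  - exact (proj1 (rem_mm u 0 (Nat.le_0_l n) (Hu 0%nat (Nat.le_0_l n)))).
  - intros i Hi Hlt. destruct (lt_numB i n Hlt) as [j [Hj ->]].
    destruct (rem_mm u j ltac:(lia) (Hu j ltac:(lia))) as [R1 L1].
    destruct (rem_mm u (S j) ltac:(lia) (Hu (S j) ltac:(lia))) as [R2 L2].
    exists (powB x j). split; [exact L1|]. exists (powB x (S j)). split; [exact L2|]. split; [exact R1|].
    split; [exact R2|]. reflexivity.
  - exact (proj1 (rem_mm u n (le_n n) (Hu n (le_n n)))).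
Qed.

End Beta.

Lemma exp_std x n : x <> 0' -> expB x (numB n) (powB x n).
Proof.
  intro Hx. destruct (all_div (powB x n ⊕ numB n)) as [v [H1 H2]]. apply (beta_exp x Hx n v); auto.
Qed.

Section Main.
Variable inA : M -> Prop.
Variable e : M -> M -> M.
Hypothesis HE : ExpPrime M inA e.
Variable K3 : nat.

Lemma PA0 : inA 0'. Proof. destruct HE as [[H _] _]. auto. Qed.
Lemma PA1 : inA 1'. Proof. destruct HE as [[_ [H _]] _]. auto. Qed.
Lemma PAadd x y : inA x -> inA y -> inA (x ⊕ y). Proof. destruct HE as [[_ [_ [H _]]] _]. auto. Qed.
Lemma PAle x y : inA x -> inA y -> x ≤ y -> exists z, inA z /\ x ⊕ z = y.
Proof. destruct HE as [[_ [_ [_ [_ [_ [_ [_ [_ [_ [_ [H _]]]]]]]]]]] _]. intros. apply H; auto. Qed.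
Lemma PAdiv n x : (0 < n)%nat -> inA x -> exists y, inA y /\ nsum M n y ≤ x /\ x < nsum M n (y ⊕ 1').
Proof. destruct HE as [[_ [_ [_ [_ [_ [_ [_ [_ [_ [_ [_ H]]]]]]]]]]] _]. intros. apply H; auto. Qed.
Lemma E1 x y : inA y -> (x = 1' \/ y = 0') <-> e x y = 1'. Proof. destruct HE as [_ [H _]]. auto. Qed.
Lemma E2 x y : inA y -> x <> 0' -> e x y <> 0'. Proof. destruct HE as [_ [_ [H _]]]. auto. Qed.
Lemma E3 x : e x 1' = x. Proof. destruct HE as [_ [_ [_ [H _]]]]. auto. Qed.
Lemma E4 x y z : inA y -> inA z -> e x (y ⊕ z) = e x y ⊗ e x z. Proof. destruct HE as [_ [_ [_ [_ H]]]]. auto. Qed.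

Lemma inA_numB n : inA (numB n).
Proof. induction n; simpl. apply PA0. apply PAadd; auto. apply PA1. Qed.

Lemma e_numB x n : e x (numB n) = powB x n.
Proof.
  induction n; simpl.
  - apply E1. apply PA0. auto.
  - rewrite E4, IHn, E3. auto. apply inA_numB. apply PA1.
Qed.

Lemma inA_nsum n q : inA q -> inA (nsum M n q).
Proof. intro H. induction n; simpl. apply PA0. apply PAadd; auto. Qed.

Lemma e_nsum x n q : inA q -> e x (nsum M n q) = powB (e x q) n.
Proof.
  intro H. induction n; simpl.
  - apply E1. apply PA0. auto.
  - rewrite E4, IHn; auto. apply inA_nsum; auto.
Qed.

Definition SideInfo (V C : M) : Prop :=
  1' ≤ C /\ dvd C V /\ (forall p, primeB p -> dvd p V -> dvd p C) /\ powB C 2 ≤ V.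

Lemma powB_ge1 x n : x <> 0' -> 1' ≤ powB x n.
Proof. intro. apply ne0_ge1. apply powB_ne0; auto. Qed.

Lemma decomp g s : 1' < g -> inA s -> 1' < s ->
  (exists m, (2 <= m)%nat /\ s = numB m /\ e g s = powB g m) \/
  (exists C, SideInfo (e g s) C /\ numB K3 ⊗ powB C 4 ≤ e g s).
Proof.
  intros Hg Hs Hs1.
  assert (Hg0 : g <> 0'). { intro E. subst. apply (lt_not_le _ _ Hg). apply le_0_l. }
  destruct (PAdiv 16 s ltac:(lia) Hs) as [q [Hq [Hq1 Hq2]]].
  destruct (PAle _ _ (inA_nsum 16 q Hq) Hs Hq1) as [rho [Hrho Erho]].
  assert (Hrl : rho < numB 16).
  { rewrite !nsum_eq in *. apply lt_succ_le. apply (add_le_cancel _ _ (numB 16 ⊗ q)).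
    apply lt_succ_le in Hq2. rewrite <- Erho in Hq2.
    replace (numB 16 ⊗ (q ⊕ 1')) with (numB 16 ⊕ numB 16 ⊗ q) in Hq2 by ring. eapply le_trans; [|apply Hq2].
    replace (rho ⊕ 1' ⊕ numB 16 ⊗ q) with (numB 16 ⊗ q ⊕ rho ⊕ 1') by ring.
    apply le_refl. }
  destruct (lt_numB _ _ Hrl) as [j [Hj Ej]].
  destruct (classic (q ≤ numB K3)) as [Hq3|Hq3].
  - left. destruct (le_numB _ _ Hq3) as [j' [_ Ej']].
    assert (Es : s = numB (16 * j' + j)).
    { rewrite numB_add, numB_mul, <- Ej', <- Ej, <- Erho, nsum_eq. auto. }
    exists (16 * j' + j)%nat. split; [|split; auto].
    + apply numB_le_inv. rewrite <- Es. apply lt_succ_le in Hs1. simpl. rewrite add_0_l. auto.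
    + rewrite Es. apply e_numB.
  - right.
    assert (Hq4 : numB (S K3) ≤ q).
    { apply (proj1 (lt_succ_le _ _)). split. destruct (le_total q (numB K3)); tauto. intro E. apply Hq3. rewrite <- E. apply le_refl. }
    destruct (PAle _ _ (inA_numB (S K3)) Hq Hq4) as [q2 [Hq2A Eq2]].
    set (X := e g q). set (Z := e g q2).
    assert (HZ : Z <> 0') by (apply E2; auto).
    assert (EX : X = powB g (S K3) ⊗ Z). { unfold X, Z. rewrite <- Eq2, E4, e_numB; auto. apply inA_numB. }
    assert (EV : e g s = powB X 16 ⊗ powB g j).
    { rewrite <- Erho, E4, e_nsum, Ej, e_numB; auto. all: try apply inA_nsum; auto. all: try (rewrite <- Ej; auto). }
    set (T := powB g K3 ⊗ Z).
    assert (EXT : X = g ⊗ T). { rewrite EX. unfold T. simpl. ring. }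
    assert (HT : T <> 0'). { unfold T. apply mul_ne_0; auto. apply powB_ne0; auto. }
    assert (HX : X <> 0'). { rewrite EXT. apply mul_ne_0; auto. }
    assert (HgX : g ≤ X). { rewrite EXT. apply le_mul_r; auto. }
    assert (P16 : powB X 16 = X ⊗ X ⊗ powB X 14).
    { change 16%nat with (2 + 14)%nat. rewrite powB_add. simpl (powB X 2). ring. }
    assert (P8 : powB X 16 = powB X 8 ⊗ powB X 8).
    { change 16%nat with (8 + 8)%nat. rewrite powB_add. auto. }
    assert (HK : numB K3 ≤ powB X 8).
    { apply (le_trans _ (powB g K3)). apply lt_le. apply powB_gt; auto.
      apply (le_trans _ X). rewrite EX. simpl. apply (le_trans _ (powB g K3 ⊗ g)).
      apply le_mul_r; auto. apply le_mul_r; auto.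
      rewrite <- (powB_1 X) at 1. apply powB_mono_exp; auto; lia. }
    assert (HC4 : powB (X ⊗ g) 4 ≤ powB X 8).
    { apply (le_trans _ (powB (X ⊗ X) 4)). apply powB_mono_base. apply mul_le_mono; auto. apply le_refl.
      rewrite powB_mulb. change 8%nat with (4 + 4)%nat. rewrite powB_add. apply le_refl. }
    assert (HV16 : powB X 16 ≤ e g s). { rewrite EV. apply le_mul_r. apply powB_ne0; auto. }
    exists (X ⊗ g). split; [split; [|split; [|split]]|].
    + apply ne0_ge1. apply mul_ne_0; auto.
    + exists (T ⊗ powB X 14 ⊗ powB g j). transitivity (X ⊗ (g ⊗ T) ⊗ powB X 14 ⊗ powB g j). ring.
      rewrite <- EXT, EV, P16. ring.
    + intros p Hp Hd. rewrite EV in Hd. destruct (euclid _ _ _ Hp Hd) as [H|H].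
      * apply dvd_mul_r. apply (prime_dvd_pow _ _ 16); auto.
      * apply dvd_mul_l. apply (prime_dvd_pow _ _ j); auto.
    + apply (le_trans _ (powB (X ⊗ g) 4)). apply powB_mono_exp; auto. apply mul_ne_0; auto.
      apply (le_trans _ _ _ HC4). apply (le_trans _ (powB X 16)); auto. rewrite P8. apply le_mul_r.
      apply powB_ne0; auto.
    + apply (le_trans _ (powB X 8 ⊗ powB X 8)). apply mul_le_mono; auto. rewrite <- P8. auto.
Qed.

End Main.

Lemma small_info g m : 1' < g -> (2 <= m)%nat -> SideInfo (powB g m) g.
Proof.
  intros Hg Hm. assert (Hg0 : g <> 0'). { intro E. subst. apply (lt_not_le _ _ Hg). apply le_0_l. }
  split; [|split; [|split]].
  - apply lt_le; auto.
  - destruct m as [|m0]. lia. simpl. apply dvd_mul_l. apply dvd_refl.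
  - intros p Hp H. apply (prime_dvd_pow _ _ m); auto.
  - apply powB_mono_exp; auto.
Qed.

Lemma pow4_le V C : SideInfo V C -> powB C 4 ≤ V ⊗ V.
Proof.
  intros [_ [_ [_ H]]]. change 4%nat with (2 + 2)%nat. rewrite powB_add. apply mul_le_mono; auto.
Qed.

Lemma abc_contra K z w Cz Cw : (forall r, sat M r (abc_sentence K)) -> w <> 0' -> z = w ⊕ 1' ->
  SideInfo z Cz -> SideInfo w Cw ->
  (numB (K*K*K) ⊗ powB Cz 4 ≤ z \/ numB (K*K*K) ⊗ powB Cw 4 ≤ w) -> False.
Proof.
  intros Habc Hw Ez Iz Iw Hl.
  assert (Hz : z <> 0'). { rewrite Ez. apply A1. }
  destruct (rad_exists (1' ⊗ w ⊗ z) (Cw ⊗ Cz)) as [R [HR HRle]].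
  - rewrite mul_1_l. apply mul_ne_0; auto.
  - apply ne0_ge1. apply mul_ne_0; apply ge1_ne0; [apply Iw|apply Iz].
  - destruct Iw as [_ [[k1 E1'] _]]. destruct Iz as [_ [[k2 E2'] _]]. exists (k1 ⊗ k2).
    rewrite <- E1', <- E2'. ring.
  - intros p Hp H. destruct (euclid _ _ _ Hp H) as [H1|H1].
    + rewrite mul_1_l in H1. apply dvd_mul_r. apply Iw; auto.
    + apply dvd_mul_l. apply Iz; auto.
  - assert (Hlt := abc_sem K Habc 1' w z R lt_0_1).
    assert (Hw' : 0' < w). { split. apply le_0_l. intro E. apply Hw. auto. }
    specialize (Hlt Hw' ltac:(rewrite Ez; apply add_comm)).
    assert (C1 : forall u, coprimeB 1' u). { intros u d _ H1 _. apply dvd_1; auto. }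
    specialize (Hlt (C1 w) (C1 z)).
    assert (C2 : coprimeB w z). { intros d _ H1 H2. apply dvd_1. apply (dvd_sub _ w); auto. rewrite <- Ez. auto. }
    specialize (Hlt C2 HR).
    apply (lt_not_le _ _ Hlt).
    assert (Hwz : w ≤ z). { rewrite Ez. apply le_add_r. }
    assert (E4' : R ⊗ R ⊗ R ⊗ R = powB R 4). { simpl. ring. }
    rewrite E4'. apply (le_trans _ (numB (K*K*K) ⊗ (powB Cw 4 ⊗ powB Cz 4))).
    { apply mul_le_mono. apply le_refl. rewrite <- powB_mulb. apply powB_mono_base. auto. }
    assert (Pz := pow4_le _ _ Iz). assert (Pw := pow4_le _ _ Iw).
    destruct Hl as [Hl|Hl].
    + apply (le_trans _ (z ⊗ (w ⊗ w))).
      * replace (numB (K * K * K) ⊗ (powB Cw 4 ⊗ powB Cz 4)) with ((numB (K * K * K) ⊗ powB Cz 4) ⊗ powB Cw 4) by ring.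
        apply mul_le_mono; auto.
      * replace (z ⊗ z ⊗ z) with (z ⊗ (z ⊗ z)) by ring. apply mul_le_mono. apply le_refl. apply mul_le_mono; auto.
    + apply (le_trans _ (w ⊗ (z ⊗ z))).
      * replace (numB (K * K * K) ⊗ (powB Cw 4 ⊗ powB Cz 4)) with ((numB (K * K * K) ⊗ powB Cw 4) ⊗ powB Cz 4) by ring.
        apply mul_le_mono; auto.
      * replace (z ⊗ z ⊗ z) with (z ⊗ (z ⊗ z)) by ring. apply mul_le_mono; auto. apply le_refl.
Qed.

Lemma main_catalan K inA e : ExpPrime M inA e ->
  (forall r, sat M r (abc_sentence K)) -> (forall r, sat M r catalan_sentence) -> CatalanFor M inA e.
Proof.
  intros HE Habc Hcat x y a b Ha Hb Hx Hy Ha1 Hb1 Heq.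
  assert (Hy0 : y <> 0'). { intro E. subst. apply (lt_not_le _ _ Hy). apply le_0_l. }
  assert (Hw0 : e y b <> 0') by (apply (E2 inA e HE); auto).
  destruct (decomp inA e HE (K*K*K) x a Hx Ha Ha1) as [[m [Hm [Ea Ez]]] | [Cz [Iz Lz]]];
  destruct (decomp inA e HE (K*K*K) y b Hy Hb Hb1) as [[m' [Hm' [Eb Ew]]] | [Cw [Iw Lw]]].
  - assert (Hx0 : x <> 0'). { intro E. subst. apply (lt_not_le _ _ Hx). apply le_0_l. }
    destruct (cat_sem Hcat x y a b (e x a) (e y b) Hx Hy Ha1 Hb1) as [R1 [R2 [R3 R4]]]; auto.
    + rewrite Ez, Ea. apply exp_std; auto.
    + rewrite Ew, Eb. apply exp_std; auto.
    + unfold three, two. simpl in *. rewrite add_0_l in *. auto.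
  - exfalso. rewrite Ez in Heq. apply (abc_contra K _ _ x Cw Habc Hw0 Heq); auto.
    + rewrite <- Ez. rewrite Ez. apply small_info; auto.
  - exfalso. apply (abc_contra K _ _ Cz y Habc Hw0 Heq); auto.
    rewrite Ew. apply small_info; auto.
  - exfalso. apply (abc_contra K _ _ Cz Cw Habc Hw0 Heq); auto.
Qed.

End Arith.

Theorem proposition5p4 :
  forall (S : theory) (K : nat),
    ExtendsISigma1 S ->
    Proves S (abc_sentence K) ->
    Proves S catalan_sentence ->
    forall (B : Lstr) (inA : B -> Prop) (e : B -> B -> B),
      Model S B ->
      ExpPrime B inA e ->
      CatalanFor B inA e.
Proof.
  intros S K HS Habc Hcat B inA e HM HE.
  apply (main_catalan B (HS B HM) K inA e HE).
  - intro r. apply (Habc B HM).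
  - intro r. apply (Hcat B HM).
Qed.
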